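(* Let $m \ge 2$ and $n \ge 2m+1$ be integers, and write $p_j = n-2m+2j$. Then for every real $r$ with $|r|<1$, $$\int_{-1}^1 \frac{U_n(s)(1-s^2)^{m-\frac{1}{2}}}{(s-r)^4}\,ds = (-1)^{m}\left(\frac{1}{2}\right)^{2m+1}\frac{1}{3}\frac{\pi}{(1-r^2)^2}\sum_{j=0}^{2m-2}(-1)^j\binom{2m-2}{j}(p_j+3)\Big\{(p_j+4)(p_j+5)U_{p_j}(r)-\big[2p_j^2+12p_j+10\big]U_{p_j+2}(r)+(p_j+2)(p_j+1)U_{p_j+4}(r)\Big\},$$ where the integral is a Hadamard finite-part integral.
   Context: $U_k(s)=\frac{\sin((k+1)\cos^{-1}s)}{\sin(\cos^{-1}s)}$ is the Tchebyshev polynomial of the second kind. For a positive integer $\alpha\ge 2$ and $|r|<1$, the integral $\int_{-1}^1 \frac{D(s)}{(s-r)^\alpha}ds$ is understood in the Hadamard finite-part sense; in particular it satisfies $\int_{-1}^1 \frac{D(s)}{(s-r)^{\alpha}}ds=\frac{1}{\alpha-1}\frac{d}{dr}\int_{-1}^1\frac{D(s)}{(s-r)^{\alpha-1}}ds$, where for $\alpha-1=1$ the right-hand integral is a Cauchy principal value. $\binom{a}{j}=\frac{a!}{j!(a-j)!}$. *)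

(* Defs.v *)
From Stdlib Require Import Reals.
From Coquelicot Require Import Coquelicot.
Open Scope R_scope.

Definition U (k : nat) (s : R) : R :=
  sin (INR (S k) * acos s) / sin (acos s).

Definition is_PV (D : R -> R) (r l : R) : Prop :=
  filterlim
    (fun eps => RInt (fun s => D s / (s - r)) (-1) (r - eps)
              + RInt (fun s => D s / (s - r)) (r + eps) 1)
    (at_right 0) (locally l).

(* Hadamard finite part of order (k+1):
   is_FP D k r l  means  f.p. int_{-1}^1 D(s)/(s-r)^(k+1) ds = l,
   defined through the recursion
     FP_{a}(r) = 1/(a-1) d/dr FP_{a-1}(r),   FP_1 = principal value,
   for r in (-1,1). *)
Fixpoint is_FP (D : R -> R) (k : nat) (r l : R) : Prop :=
  match k with
  | O => is_PV D r l
  | S k' => exists F : R -> R,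
      (forall r', -1 < r' < 1 -> is_FP D k' r' (F r')) /\
      is_derive F r (INR (S k') * l)
  end.

(* Main.v *)
Require Import Defs.
From Stdlib Require Import Reals.
From Coquelicot Require Import Coquelicot.
From Stdlib Require Import Lra Lia.
Open Scope R_scope.
Lemma cont_plus (f g : R -> R) x : continuous f x -> continuous g x -> continuous (fun y => f y + g y) x.
Proof. intros H1 H2. exact (continuous_plus f g x H1 H2). Qed.
Lemma cont_opp (f : R -> R) x : continuous f x -> continuous (fun y => - f y) x.
Proof. intros H1. exact (continuous_opp f x H1). Qed.
Lemma cont_minus (f g : R -> R) x : continuous f x -> continuous g x -> continuous (fun y => f y - g y) x.
Proof. intros H1 H2. exact (continuous_minus f g x H1 H2). Qed.
Lemma cont_mult (f g : R -> R) x : continuous f x -> continuous g x -> continuous (fun y => f y * g y) x.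
Proof. intros H1 H2. exact (continuous_mult (K:=R_AbsRing) f g x H1 H2). Qed.
Lemma cont_inv (f : R -> R) x : continuous f x -> f x <> 0 -> continuous (fun y => / f y) x.
Proof. intros H1 H2. exact (continuous_Rinv_comp f x H1 H2). Qed.
Lemma cont_div (f g : R -> R) x : continuous f x -> continuous g x -> g x <> 0 -> continuous (fun y => f y / g y) x.
Proof. intros H1 H2 H3. unfold Rdiv. apply cont_mult; auto. apply cont_inv; auto. Qed.
Lemma cont_der (f : R -> R) x : ex_derive f x -> continuous f x.
Proof. intros H. exact (ex_derive_continuous (K:=R_AbsRing) (V:=R_NormedModule) f x H). Qed.
Lemma cont_const (c x : R) : continuous (fun _ => c) x.
Proof. apply continuous_const. Qed.
Lemma cont_id (x : R) : continuous (fun y => y) x.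
Proof. apply continuous_id. Qed.

Definition ac (x : R) : R := PI/2 - 2 * atan (x / (1 + sqrt (1 - x²))).

Lemma ac_acos x : -1 <= x <= 1 -> ac x = acos x.
Proof.
  intros Hx. rewrite acos_asin by lra. unfold ac.
  set (t := asin x / 2).
  assert (Hb := asin_bound x).
  assert (Ht : - (PI/2) < t < PI/2) by (unfold t; pose proof PI_RGT_0; lra).
  assert (Hc : 0 < cos t) by (apply cos_gt_0; lra).
  assert (H2 : asin x = 2 * t) by (unfold t; field).
  assert (Hs : sin (2*t) = x) by (rewrite <- H2; apply sin_asin; lra).
  assert (Hc2 : cos (2*t) = sqrt (1 - x²)) by (rewrite <- H2; apply cos_asin; lra).
  assert (Htan : tan t = x / (1 + sqrt (1 - x²))).
  { replace (x / (1 + sqrt (1 - x²))) with (sin (2*t) / (1 + cos (2*t))) by (rewrite Hs, Hc2; reflexivity).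
    rewrite sin_2a, cos_2a_cos. unfold tan. field. split; nra. }
  rewrite <- Htan, atan_tan by lra. lra.
Qed.

Lemma ac_cont x : continuous ac x.
Proof.
  unfold ac. apply cont_minus. apply cont_const.
  apply cont_mult. apply cont_const.
  apply continuous_atan_comp.
  apply cont_div. apply cont_id.
  apply cont_plus. apply cont_const.
  apply continuous_sqrt_comp.
  apply cont_der. auto_derive. auto.
  pose proof (sqrt_pos (1 - x²)). lra.
Qed.
Lemma exR (f : R -> R) a b : (forall z, Rmin a b <= z <= Rmax a b -> continuous f z) -> ex_RInt f a b.
Proof. intros H. exact (@ex_RInt_continuous R_CompleteNormedModule f a b H). Qed.
Lemma ChaslesR (f : R -> R) a b c : ex_RInt f a b -> ex_RInt f b c -> @eq R (RInt f a b + RInt f b c) (RInt f a c).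
Proof. intros H1 H2. exact (@RInt_Chasles R_CompleteNormedModule f a b c H1 H2). Qed.
Lemma RInt_plusR (f g : R -> R) a b : ex_RInt f a b -> ex_RInt g a b ->
  @eq R (RInt (fun x => f x + g x) a b) (RInt f a b + RInt g a b).
Proof. intros H1 H2. exact (@RInt_plus R_CompleteNormedModule f g a b H1 H2). Qed.
Lemma RInt_minusR (f g : R -> R) a b : ex_RInt f a b -> ex_RInt g a b ->
  @eq R (RInt (fun x => f x - g x) a b) (RInt f a b - RInt g a b).
Proof. intros H1 H2. exact (@RInt_minus R_CompleteNormedModule f g a b H1 H2). Qed.
Lemma RInt_scalR (f : R -> R) a b c : ex_RInt f a b ->
  @eq R (RInt (fun x => c * f x) a b) (c * RInt f a b).
Proof. intros H1. exact (@RInt_scal R_CompleteNormedModule f a b c H1). Qed.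
Lemma ex_plusR (f g : R -> R) a b : ex_RInt f a b -> ex_RInt g a b -> ex_RInt (fun x => f x + g x) a b.
Proof. intros H1 H2. exact (@ex_RInt_plus R_NormedModule f g a b H1 H2). Qed.
Lemma ex_scalR (f : R -> R) a b c : ex_RInt f a b -> ex_RInt (fun x => c * f x) a b.
Proof. intros H1. exact (@ex_RInt_scal R_NormedModule f a b c H1). Qed.
Lemma FTC (f df : R -> R) a b :
  (forall x, Rmin a b <= x <= Rmax a b -> is_derive f x (df x)) ->
  (forall x, Rmin a b <= x <= Rmax a b -> continuous df x) ->
  @eq R (RInt df a b) (f b - f a).
Proof. intros H1 H2. apply is_RInt_unique. exact (@is_RInt_derive R_CompleteNormedModule f df a b H1 H2). Qed.
Lemma compR (f g dg : R -> R) a b :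
  (forall x, Rmin a b <= x <= Rmax a b -> continuous f (g x)) ->
  (forall x, Rmin a b <= x <= Rmax a b -> is_derive g x (dg x) /\ continuous dg x) ->
  @eq R (RInt (fun y => dg y * f (g y)) a b) (RInt f (g a) (g b)).
Proof. intros H1 H2. exact (@RInt_comp R_CompleteNormedModule f g dg a b H1 H2). Qed.
Lemma lim_plus {T} (F : (T -> Prop) -> Prop) {FF : Filter F} (f g : T -> R) a b :
  filterlim f F (locally a) -> filterlim g F (locally b) ->
  filterlim (fun x => f x + g x) F (locally (a + b)).
Proof.
  intros H1 H2.
  exact (@filterlim_comp_2 _ _ _ _ F _ _ _ FF f g (fun x y : R => plus x y) H1 H2 (filterlim_plus a b)).
Qed.
Lemma lim_scal {T} (F : (T -> Prop) -> Prop) {FF : Filter F} (f : T -> R) c a :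
  filterlim f F (locally a) -> filterlim (fun x => c * f x) F (locally (c * a)).
Proof.
  intros H1.
  exact (filterlim_comp _ _ _ f (fun x : R => scal c x) F (locally a) (locally (scal c a)) H1 (filterlim_scal_r c a)).
Qed.
Lemma lim_const {T} (F : (T -> Prop) -> Prop) {FF : Filter F} c :
  filterlim (fun _ : T => c) F (locally (c:R)).
Proof. apply filterlim_const. Qed.
Lemma lim_minus {T} (F : (T -> Prop) -> Prop) {FF : Filter F} (f g : T -> R) a b :
  filterlim f F (locally a) -> filterlim g F (locally b) ->
  filterlim (fun x => f x - g x) F (locally (a - b)).
Proof.
  intros H1 H2. unfold Rminus.
  apply (lim_plus F); auto.
  replace (- b) with ((-1) * b) by ring.
  apply (filterlim_ext (fun x => (-1) * g x)). intros; ring.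
  apply (lim_scal F); auto.
Qed.
Lemma lim_sum {T} (F : (T -> Prop) -> Prop) {FF : Filter F} (f : nat -> T -> R) (l : nat -> R) K :
  (forall j, (j <= K)%nat -> filterlim (f j) F (locally (l j))) ->
  filterlim (fun x => sum_f_R0 (fun j => f j x) K) F (locally (sum_f_R0 l K)).
Proof.
  induction K; intros H; simpl.
  - apply H; lia.
  - apply (lim_plus F). apply IHK; intros; apply H; lia. apply H; lia.
Qed.

Lemma ev_small (d : R) : 0 < d -> at_right 0 (fun e => 0 < e < d).
Proof.
  intros Hd. exists (mkposreal d Hd). intros y Hy Hy0. split; auto.
  unfold ball in Hy; simpl in Hy. unfold AbsRing_ball, abs, minus, plus, opp in Hy; simpl in Hy.
  rewrite Ropp_0, Rplus_0_r in Hy. apply Rabs_def2 in Hy. lra.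
Qed.

Definition PVf (h : R -> R) (r eps : R) := RInt h (-1) (r - eps) + RInt h (r + eps) 1.

Lemma ball_R (x e y : R) : Rabs (y - x) < e -> ball x e y.
Proof. intros H. unfold ball; simpl. unfold AbsRing_ball, abs, minus, plus, opp; simpl. exact H. Qed.

Lemma PV_regular (f : R -> R) (r : R) :
  -1 < r < 1 -> (forall x, continuous f x) -> (forall x, Rabs (f x) <= 1) ->
  filterlim (PVf f r) (at_right 0) (locally (RInt f (-1) 1)).
Proof.
  intros Hr Hc Hb.
  apply filterlim_locally. intros e.
  assert (Hd : 0 < Rmin (e/3) (Rmin (1 - r) (1 + r))).
  { destruct e as [e He]; simpl. repeat apply Rmin_pos; lra. }
  apply (filter_imp (fun eps => 0 < eps < Rmin (e/3) (Rmin (1 - r) (1 + r)))).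
  2: apply ev_small; auto.
  intros eps [H0 H1].
  assert (H2 := Rmin_l (e/3) (Rmin (1 - r) (1 + r))).
  assert (H3 := Rmin_r (e/3) (Rmin (1 - r) (1 + r))).
  assert (H4 := Rmin_l (1 - r) (1 + r)).
  assert (H5 := Rmin_r (1 - r) (1 + r)).
  apply ball_R.
  assert (Hex : forall a b, ex_RInt f a b).
  { intros a b. apply exR. intros; apply Hc. }
  assert (E : RInt f (-1) 1 = RInt f (-1) (r - eps) + RInt f (r - eps) (r + eps) + RInt f (r + eps) 1).
  { rewrite ChaslesR; auto. rewrite ChaslesR; auto. }
  assert (B : Rabs (RInt f (r - eps) (r + eps)) <= ((r + eps) - (r - eps)) * 1).
  { apply abs_RInt_le_const; auto. lra. }
  unfold PVf. rewrite E.
  replace (RInt f (-1) (r - eps) + RInt f (r + eps) 1 -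
      (RInt f (-1) (r - eps) + RInt f (r - eps) (r + eps) + RInt f (r + eps) 1))
    with (- RInt f (r - eps) (r + eps)) by ring.
  rewrite Rabs_Ropp. destruct e as [e He]; simpl in *. lra.
Qed.
Lemma ex_extR (f g : R -> R) a b : (forall x, Rmin a b < x < Rmax a b -> f x = g x) -> ex_RInt f a b -> ex_RInt g a b.
Proof. intros H1 H2. exact (@ex_RInt_ext R_NormedModule f g a b H1 H2). Qed.
Definition sN (N : nat) (s : R) := sin (INR N * ac s).
Definition hN (N : nat) (r s : R) := sN N s / (s - r).

Lemma sN_cont N x : continuous (sN N) x.
Proof. unfold sN. apply continuous_sin_comp. apply cont_mult. apply cont_const. apply ac_cont. Qed.
Lemma sN_bound N x : Rabs (sN N x) <= 1.
Proof. unfold sN. apply Rabs_le. apply SIN_bound. Qed.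
Lemma hN_cont N r s : s <> r -> continuous (hN N r) s.
Proof. intros H. unfold hN. apply cont_div. apply sN_cont. apply cont_minus. apply cont_id. apply cont_const. lra. Qed.

Lemma ex_left (f : R -> R) r eps : -1 < r -> 0 < eps -> (forall s, s <> r -> continuous f s) -> ex_RInt f (-1) (r - eps).
Proof.
  intros H1 H2 H3. apply exR. intros z Hz. apply H3.
  assert (Rmax (-1) (r - eps) < r) by (apply Rmax_lub_lt; lra). lra.
Qed.
Lemma ex_right (f : R -> R) r eps : r < 1 -> 0 < eps -> (forall s, s <> r -> continuous f s) -> ex_RInt f (r + eps) 1.
Proof.
  intros H1 H2 H3. apply exR. intros z Hz. apply H3.
  assert (r < Rmin (r + eps) 1) by (apply Rmin_glb_lt; lra). lra.
Qed.

Lemma cos_ac s : -1 <= s <= 1 -> cos (ac s) = s.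
Proof. intros H. rewrite ac_acos by lra. apply cos_acos; lra. Qed.

Lemma sin_rec (N : nat) t : sin (INR (S (S N)) * t) = 2 * cos t * sin (INR (S N) * t) - sin (INR N * t).
Proof.
  rewrite !S_INR.
  assert (E1 : (INR N + 1 + 1) * t = (INR N + 1) * t + t) by ring.
  assert (E2 : INR N * t = (INR N + 1) * t - t) by ring.
  rewrite E1, E2, sin_plus, sin_minus. ring.
Qed.

Lemma hN_rec N r s : -1 <= s <= 1 -> s <> r ->
  hN (S (S N)) r s = 2 * r * hN (S N) r s - hN N r s + 2 * sN (S N) s.
Proof.
  intros H1 H2. unfold hN, sN. rewrite sin_rec, cos_ac by lra.
  field. lra.
Qed.

Lemma PV_rec N r eps : -1 < r - eps -> r + eps < 1 -> 0 < eps ->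
  PVf (hN (S (S N)) r) r eps =
  2 * r * PVf (hN (S N) r) r eps - PVf (hN N r) r eps + 2 * PVf (sN (S N)) r eps.
Proof.
  intros H1 H2 H3. unfold PVf.
  assert (C1 : forall M s, s <> r -> continuous (hN M r) s) by (intros; apply hN_cont; auto).
  assert (C2 : forall M s, s <> r -> continuous (sN M) s) by (intros; apply sN_cont).
  assert (E : forall a b, -1 <= a -> b <= 1 -> a <= b -> (r <= a \/ b <= r) -> ex_RInt (hN (S N) r) a b -> ex_RInt (hN N r) a b -> ex_RInt (sN (S N)) a b ->
     RInt (hN (S (S N)) r) a b = 2 * r * RInt (hN (S N) r) a b - RInt (hN N r) a b + 2 * RInt (sN (S N)) a b).
  { intros a b Ha Hb Hab' Hab E1 E2 E3.
    rewrite (RInt_ext _ (fun s => (2 * r * hN (S N) r s - hN N r s) + 2 * sN (S N) s)).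
    2:{ intros x Hx. rewrite Rmin_left, Rmax_right in Hx by lra. apply hN_rec; lra. }
    assert (X1 : ex_RInt (fun s => 2 * r * hN (S N) r s) a b) by (apply ex_scalR; auto).
    assert (X2 : ex_RInt (fun s => 2 * sN (S N) s) a b) by (apply ex_scalR; auto).
    assert (X3 : ex_RInt (fun s => 2 * r * hN (S N) r s - hN N r s) a b).
    { assert (X4 : ex_RInt (fun s => 2 * r * hN (S N) r s + (-1) * hN N r s) a b).
      { apply (ex_plusR (fun s => 2 * r * hN (S N) r s) (fun s => (-1) * hN N r s)). exact X1.
        apply (ex_scalR (hN N r)). exact E2. }
      refine (ex_extR _ (fun s => 2 * r * hN (S N) r s - hN N r s) a b _ X4). intros; ring. }
    rewrite (RInt_plusR _ _ _ _ X3 X2).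
    rewrite (RInt_minusR _ _ _ _ X1 E2).
    rewrite (RInt_scalR _ _ _ _ E1), (RInt_scalR _ _ _ _ E3). reflexivity. }
  rewrite !E; try lra.
  all: first [ apply ex_left; auto; lra | apply ex_right; auto; lra | idtac ].
Qed.
Lemma sin_nPI k : sin (INR k * PI) = 0.
Proof.
  induction k. simpl. rewrite Rmult_0_l. apply sin_0.
  rewrite S_INR, Rmult_plus_distr_r, Rmult_1_l, sin_plus, IHk, sin_PI. ring.
Qed.

Lemma cos_der (y : R) : is_derive cos y (- sin y) /\ continuous (fun y => - sin y) y.
Proof. split. auto_derive. auto. ring. apply cont_der. auto_derive. auto. Qed.

Lemma VN_comp N : @eq R (RInt (sN N) (-1) 1) (RInt (fun y => - sin y * sin (INR N * y)) PI 0).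
Proof.
  rewrite <- cos_PI, <- cos_0 at 1. rewrite <- (compR (sN N) cos (fun y => - sin y)).
  - apply RInt_ext. intros x Hx. rewrite Rmin_right, Rmax_left in Hx by (pose proof PI_RGT_0; lra).
    unfold sN. rewrite ac_acos by (split; [apply Rge_le, Rge_trans with (-1); [apply Rle_ge, COS_bound| lra] | apply COS_bound]).
    rewrite acos_cos by lra. reflexivity.
  - intros; apply sN_cont.
  - intros; apply cos_der.
Qed.

Lemma VN_1 : @eq R (RInt (sN 1) (-1) 1) (PI / 2).
Proof.
  rewrite VN_comp.
  rewrite (FTC (fun y => sin (2 * y) / 4 - y / 2)).
  - rewrite Rmult_0_r, sin_0. replace (2 * PI) with (INR 2 * PI) by (simpl; ring). rewrite sin_nPI. field.
  - intros x _. auto_derive. auto. simpl. replace (1 * x) with x by ring. rewrite cos_2a_sin. field.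
  - intros x _. apply cont_der. auto_derive. auto.
Qed.

Lemma VN_ge2 k : @eq R (RInt (sN (S (S k))) (-1) 1) 0.
Proof.
  rewrite VN_comp.
  set (N := INR (S (S k))).
  assert (HN : N = INR k + 2) by (unfold N; rewrite !S_INR; ring).
  rewrite (FTC (fun y => sin ((N + 1) * y) / (2 * (N + 1)) - sin ((N - 1) * y) / (2 * (N - 1)))).
  - rewrite !Rmult_0_r, sin_0.
    replace ((N + 1) * PI) with (INR (k + 3) * PI) by (rewrite plus_INR, HN; simpl; ring).
    replace ((N - 1) * PI) with (INR (k + 1) * PI) by (rewrite plus_INR, HN; simpl; ring).
    rewrite !sin_nPI. field. pose proof (pos_INR k). split; lra.
  - intros x _. assert (0 <= INR k) by apply pos_INR. auto_derive. auto.
    replace ((N + 1) * x) with (N * x + x) by ring.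
    replace ((N - 1) * x) with (N * x - x) by ring.
    rewrite cos_plus, cos_minus. field. lra.
  - intros x _. apply cont_der. auto_derive. auto.
Qed.
Lemma one_minus_cos_pos z : 0 < z < 2 * PI -> 0 < 1 - cos z.
Proof.
  intros H. replace z with (2 * (z / 2)) by field. rewrite cos_2a_sin.
  assert (0 < sin (z / 2)) by (apply sin_gt_0; lra). nra.
Qed.

Definition Bf (r q phi sg : R) (y : R) :=
  - q * (ln (1 - cos (y + phi)) - ln (sg * (r - cos y))) + sin y + r * y.

Lemma Bf_der r q phi sg x : cos phi = r -> sin phi = q -> sg * sg = 1 ->
  0 < 1 - cos (x + phi) -> 0 < sg * (r - cos x) ->
  is_derive (Bf r q phi sg) x (sin x * sin x / (r - cos x)).
Proof.
  intros Hr Hq Hsg H1 H2. unfold Bf. auto_derive. split; auto.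
  rewrite cos_plus, sin_plus, Hr, Hq. rewrite cos_plus in H1. rewrite Hr, Hq in H1.
  assert (Hqr : q * q + r * r - 1 = 0).
  { rewrite <- Hr, <- Hq. pose proof (sin2_cos2 phi). unfold Rsqr in H. lra. }
  assert (Hcs : cos x * cos x + sin x * sin x - 1 = 0).
  { pose proof (sin2_cos2 x). unfold Rsqr in H. lra. }
  assert (Hsg0 : sg <> 0) by (intro; subst; lra).
  assert (HD2 : r - cos x <> 0) by (intro; rewrite H in H2; lra).
  assert (HD1 : 1 - (cos x * r - sin x * q) <> 0) by lra.
  apply (Rmult_eq_reg_r ((1 - (cos x * r - sin x * q)) * (r - cos x))).
  2: apply Rmult_integral_contrapositive; split; auto.
  transitivity (- q * (sin x * r + cos x * q) * (r - cos x) + q * sin x * (1 - (cos x * r - sin x * q))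
     + (cos x + r) * (1 - (cos x * r - sin x * q)) * (r - cos x)).
  { field. split; auto. }
  transitivity (sin x * sin x * (1 - (cos x * r - sin x * q))).
  2:{ field. auto. }
  transitivity (sin x * sin x * (1 - (cos x * r - sin x * q))
      + (q * q + r * r - 1) * (cos x * cos x + sin x * sin x - cos x * r)
      + (cos x * cos x + sin x * sin x - 1) * (- (r * r) + cos x * r - q * sin x)).
  ring. rewrite Hqr, Hcs. ring.
Qed.
Definition Phi (r q phi : R) (y : R) := - q * ln (1 - cos (y + phi)) + sin y + r * y.

Lemma Phi_cont r q phi y : 0 < 1 - cos (y + phi) -> continuous (Phi r q phi) y.
Proof.
  intros H. unfold Phi. apply cont_plus. apply cont_plus.
  apply cont_mult. apply cont_const.
  apply (continuous_comp (fun y => 1 - cos (y + phi)) ln).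
  apply cont_der. auto_derive. auto.
  apply continuous_ln. exact H.
  apply cont_der. auto_derive. auto.
  apply cont_der. auto_derive. auto.
Qed.

Lemma cos_in x : -1 <= cos x <= 1.
Proof. apply COS_bound. Qed.

Lemma ac_cos y : 0 <= y <= PI -> ac (cos y) = y.
Proof. intros H. rewrite ac_acos by apply cos_in. apply acos_cos; lra. Qed.

Lemma hN1_cos r y : 0 <= y <= PI -> hN 1 r (cos y) = sin y / (cos y - r).
Proof. intros H. unfold hN, sN. rewrite ac_cos by auto. simpl. rewrite Rmult_1_l. reflexivity. Qed.

Lemma cont_hN_cos N r y : cos y <> r -> continuous (fun y => hN N r (cos y)) y.
Proof.
  intros H. apply (continuous_comp cos (hN N r)). apply cont_der. auto_derive. auto.
  apply hN_cont. auto.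
Qed.

Lemma PV_base_eq r eps : -1 < r - eps -> r + eps < 1 -> 0 < eps ->
  PVf (hN 1 r) r eps =
  Phi r (sin (acos r)) (acos r) (acos (r - eps)) - Phi r (sin (acos r)) (acos r) (acos (r + eps)) - r * PI.
Proof.
  intros H1 H2 H3.
  pose proof PI_RGT_0 as HPI.
  set (phi := acos r). set (q := sin phi).
  assert (Hphi : 0 < phi < PI) by (apply acos_bound_lt; lra).
  assert (Hr : cos phi = r) by (apply cos_acos; lra).
  set (t1 := acos (r - eps)). set (t2 := acos (r + eps)).
  assert (Ht1 : 0 < t1 < PI) by (apply acos_bound_lt; lra).
  assert (Ht2 : 0 < t2 < PI) by (apply acos_bound_lt; lra).
  assert (Hc1 : cos t1 = r - eps) by (apply cos_acos; lra).
  assert (Hc2 : cos t2 = r + eps) by (apply cos_acos; lra).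
  assert (L : RInt (hN 1 r) (-1) (r - eps) = Bf r q phi 1 t1 - Bf r q phi 1 PI).
  { rewrite <- cos_PI. rewrite <- Hc1 at 1.
    rewrite <- (compR (hN 1 r) cos (fun y => - sin y)).
    - apply FTC.
      + rewrite Rmin_right, Rmax_left by lra. intros x Hx.
        assert (cos x <= r - eps) by (rewrite <- Hc1; apply cos_decr_1; lra).
        rewrite hN1_cos by lra.
        replace (- sin x * (sin x / (cos x - r))) with (sin x * sin x / (r - cos x)) by (field; lra).
        apply Bf_der; auto. ring. apply one_minus_cos_pos; lra. lra.
      + rewrite Rmin_right, Rmax_left by lra. intros x Hx.
        assert (cos x <= r - eps) by (rewrite <- Hc1; apply cos_decr_1; lra).
        apply cont_mult. apply cont_der. auto_derive. auto.
        apply cont_hN_cos. lra.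
    - rewrite Rmin_right, Rmax_left by lra. intros x Hx.
      assert (cos x <= r - eps) by (rewrite <- Hc1; apply cos_decr_1; lra).
      apply hN_cont. lra.
    - intros; apply cos_der. }
  assert (R : RInt (hN 1 r) (r + eps) 1 = Bf r q phi (-1) 0 - Bf r q phi (-1) t2).
  { rewrite <- cos_0. rewrite <- Hc2 at 1.
    rewrite <- (compR (hN 1 r) cos (fun y => - sin y)).
    - apply FTC.
      + rewrite Rmin_right, Rmax_left by lra. intros x Hx.
        assert (r + eps <= cos x) by (rewrite <- Hc2; apply cos_decr_1; lra).
        rewrite hN1_cos by lra.
        replace (- sin x * (sin x / (cos x - r))) with (sin x * sin x / (r - cos x)) by (field; lra).
        apply Bf_der; auto. ring. apply one_minus_cos_pos; lra. lra.
      + rewrite Rmin_right, Rmax_left by lra. intros x Hx.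
        assert (r + eps <= cos x) by (rewrite <- Hc2; apply cos_decr_1; lra).
        apply cont_mult. apply cont_der. auto_derive. auto.
        apply cont_hN_cos. lra.
    - rewrite Rmin_right, Rmax_left by lra. intros x Hx.
      assert (r + eps <= cos x) by (rewrite <- Hc2; apply cos_decr_1; lra).
      apply hN_cont. lra.
    - intros; apply cos_der. }
  unfold PVf. rewrite L, R. unfold Bf, Phi.
  rewrite Hc1, Hc2, cos_PI, sin_PI, sin_0, cos_0, Rplus_0_l, Hr.
  replace (PI + phi) with (phi + PI) by ring. rewrite neg_cos, Hr.
  replace (1 * (r - (r - eps))) with eps by ring.
  replace (-1 * (r - (r + eps))) with eps by ring.
  replace (1 * (r - -1)) with (1 - - r) by ring.
  replace (-1 * (r - 1)) with (1 - r) by ring.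
  ring.
Qed.
Lemma ev_range r : -1 < r < 1 -> at_right 0 (fun eps => 0 < eps /\ -1 < r - eps /\ r + eps < 1).
Proof.
  intros H. apply (filter_imp (fun e => 0 < e < Rmin (1 - r) (1 + r))).
  intros e He. assert (H1 := Rmin_l (1 - r) (1 + r)). assert (H2 := Rmin_r (1 - r) (1 + r)). lra.
  apply ev_small. apply Rmin_pos; lra.
Qed.

Lemma cont_lim_right (f : R -> R) l : continuous f 0 -> f 0 = l -> filterlim f (at_right 0) (locally l).
Proof.
  intros H1 H2. rewrite <- H2.
  apply (filterlim_filter_le_1 (F := locally 0)). apply filter_le_within.
  exact H1.
Qed.

Lemma PV_base r : -1 < r < 1 ->
  filterlim (PVf (hN 1 r) r) (at_right 0) (locally (- PI * cos (INR 1 * acos r))).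
Proof.
  intros Hr.
  set (phi := acos r). set (q := sin phi).
  assert (Hphi : 0 < phi < PI) by (apply acos_bound_lt; lra).
  assert (Hcr : cos phi = r) by (apply cos_acos; lra).
  apply (filterlim_ext_loc (fun eps => Phi r q phi (ac (r - eps)) - Phi r q phi (ac (r + eps)) - r * PI)).
  { apply (filter_imp (fun eps => 0 < eps /\ -1 < r - eps /\ r + eps < 1)).
    2: apply ev_range; auto.
    intros eps [H1 [H2 H3]]. rewrite PV_base_eq by lra. rewrite !ac_acos by lra. reflexivity. }
  apply cont_lim_right.
  - apply cont_minus. apply cont_minus.
    + apply (continuous_comp (fun e => ac (r - e)) (Phi r q phi)).
      apply (continuous_comp (fun e => r - e) ac). apply cont_der. auto_derive. auto. apply ac_cont.
      replace (ac (r - 0)) with phi by (rewrite Rminus_0_r, ac_acos by lra; reflexivity).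
      apply Phi_cont. apply one_minus_cos_pos. lra.
    + apply (continuous_comp (fun e => ac (r + e)) (Phi r q phi)).
      apply (continuous_comp (fun e => r + e) ac). apply cont_der. auto_derive. auto. apply ac_cont.
      replace (ac (r + 0)) with phi by (rewrite Rplus_0_r, ac_acos by lra; reflexivity).
      apply Phi_cont. apply one_minus_cos_pos. lra.
    + apply cont_const.
  - rewrite Rminus_0_r, Rplus_0_r. simpl. rewrite Rmult_1_l. fold phi. rewrite Hcr. ring.
Qed.
Definition Lv (r : R) (N : nat) : R :=
  match N with O => 0 | _ => - PI * cos (INR N * acos r) end.

Lemma cos_rec (N : nat) t : cos (INR (S (S N)) * t) = 2 * cos t * cos (INR (S N) * t) - cos (INR N * t).
Proof.
  rewrite !S_INR.
  assert (E1 : (INR N + 1 + 1) * t = (INR N + 1) * t + t) by ring.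
  assert (E2 : INR N * t = (INR N + 1) * t - t) by ring.
  rewrite E1, E2, cos_plus, cos_minus. ring.
Qed.

Lemma PV_zero r : filterlim (PVf (hN 0 r) r) (at_right 0) (locally 0).
Proof.
  apply (filterlim_ext (fun _ => 0)).
  2: apply filterlim_const.
  intros eps. unfold PVf.
  assert (Z : forall a b, @eq R (RInt (hN 0 r) a b) 0).
  { intros a b. rewrite (RInt_ext _ (fun _ => 0)).
    rewrite RInt_const. unfold scal; simpl. unfold mult; simpl. ring.
    intros x _. unfold hN, sN. simpl. rewrite Rmult_0_l, sin_0. unfold Rdiv. ring. }
  rewrite !Z. ring.
Qed.


Lemma PV_all r : -1 < r < 1 -> forall N,
  filterlim (PVf (hN N r) r) (at_right 0) (locally (Lv r N)).
Proof.
  intros Hr.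
  assert (H : forall N, filterlim (PVf (hN N r) r) (at_right 0) (locally (Lv r N)) /\
                        filterlim (PVf (hN (S N) r) r) (at_right 0) (locally (Lv r (S N)))).
  { induction N as [|N [IH1 IH2]].
    - split. apply PV_zero. apply PV_base; exact Hr.
    - split. exact IH2.
      apply (filterlim_ext_loc (fun eps => 2 * r * PVf (hN (S N) r) r eps - PVf (hN N r) r eps + 2 * PVf (sN (S N)) r eps)).
      { apply (filter_imp (fun eps => 0 < eps /\ -1 < r - eps /\ r + eps < 1)).
        2: apply ev_range; exact Hr.
        intros eps [H1 [H2 H3]]. rewrite PV_rec by lra. reflexivity. }
      assert (HL : filterlim (fun eps => 2 * r * PVf (hN (S N) r) r eps - PVf (hN N r) r eps + 2 * PVf (sN (S N)) r eps)
                    (at_right 0) (locally (2 * r * Lv r (S N) - Lv r N + 2 * RInt (sN (S N)) (-1) 1))).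
      { apply (lim_plus (at_right 0)). apply (lim_minus (at_right 0)).
        apply (lim_scal (at_right 0)). exact IH2. exact IH1.
        apply (lim_scal (at_right 0)). apply PV_regular. exact Hr. apply sN_cont. apply sN_bound. }
      replace (Lv r (S (S N))) with (2 * r * Lv r (S N) - Lv r N + 2 * RInt (sN (S N)) (-1) 1). exact HL.
      match goal with |- ?a = ?b => change (@eq R a b) end.
      assert (Hc : cos (acos r) = r) by (apply cos_acos; lra).
      destruct N as [|k].
      + rewrite VN_1. unfold Lv. simpl INR. rewrite Rmult_1_l, Hc.
        replace ((1 + 1) * acos r) with (2 * acos r) by ring. rewrite cos_2a_cos, Hc. lra.
      + rewrite VN_ge2. unfold Lv. rewrite (cos_rec (S k)), Hc. lra. }
  intros N. exact (proj1 (H N)).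
Qed.


Fixpoint bin (n k : nat) : R :=
  match n, k with
  | _, O => 1
  | O, S _ => 0
  | S n', S k' => bin n' k' + bin n' (S k')
  end.

Lemma bin_over n k : (n < k)%nat -> bin n k = 0.
Proof.
  revert k; induction n; intros k H; destruct k; try lia; simpl; auto.
  rewrite !IHn by lia. ring.
Qed.

Lemma bin_0 K : bin K 0 = 1.
Proof. destruct K; reflexivity. Qed.

Lemma C_0 n : Binomial.C n 0 = 1.
Proof. unfold Binomial.C. rewrite Nat.sub_0_r. simpl. field. apply INR_fact_neq_0. Qed.
Lemma C_nn n : Binomial.C n n = 1.
Proof. unfold Binomial.C. rewrite Nat.sub_diag. simpl. field. apply INR_fact_neq_0. Qed.

Lemma bin_C n k : (k <= n)%nat -> bin n k = Binomial.C n k.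
Proof.
  revert k; induction n; intros k H.
  - destruct k; [|lia]. simpl. rewrite C_0. reflexivity.
  - destruct k. simpl. rewrite C_0. reflexivity.
    simpl. destruct (Nat.eq_dec k n).
    + subst. rewrite (bin_over n (S n)) by lia. rewrite IHn by lia. rewrite !C_nn. ring.
    + rewrite !IHn by lia. apply pascal. lia.
Qed.

Lemma sum_shift (f : nat -> R) K : sum_f_R0 f (S K) = f O + sum_f_R0 (fun i => f (S i)) K.
Proof. rewrite (decomp_sum f (S K)) by lia. reflexivity. Qed.

Lemma bin_step (h : R -> R) (c : R) K :
  sum_f_R0 (fun j => (-1) ^ j * bin (S K) j * h (c + 2 * INR j)) (S K) =
  sum_f_R0 (fun j => (-1) ^ j * bin K j * (h (c + 2 * INR j) - h (c + 2 * INR j + 2))) K.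
Proof.
  set (a := fun j => (-1) ^ j * bin K j * h (c + 2 * INR j)).
  set (b := fun j => (-1) ^ j * bin K j * h (c + 2 * INR j + 2)).
  transitivity (a O + sum_f_R0 (fun i => a (S i) - b i) K).
  { rewrite sum_shift. f_equal.
    - unfold a. simpl. rewrite bin_0. ring.
    - apply sum_eq. intros i _. unfold a, b. simpl bin. rewrite S_INR. simpl pow.
      replace (c + 2 * (INR i + 1)) with (c + 2 * INR i + 2) by ring. ring. }
  rewrite minus_sum.
  transitivity (sum_f_R0 a (S K) - sum_f_R0 b K).
  { rewrite sum_shift. ring. }
  rewrite tech5.
  assert (a (S K) = 0) by (unfold a; rewrite bin_over by lia; ring).
  rewrite H. rewrite Rplus_0_r. rewrite <- minus_sum. apply sum_eq. intros i _. unfold a, b. ring.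
Qed.

Lemma sin_second b t : sin ((b - 2) * t) - 2 * sin (b * t) + sin ((b + 2) * t) = -4 * sin t ^ 2 * sin (b * t).
Proof.
  replace ((b - 2) * t) with (b * t - 2 * t) by ring.
  replace ((b + 2) * t) with (b * t + 2 * t) by ring.
  rewrite sin_minus, sin_plus, cos_2a_sin. ring.
Qed.

Lemma expand M (a t : R) :
  sin (a * t) * sin t ^ (2 * M) =
  (-1) ^ M * (/ 4) ^ M * sum_f_R0 (fun j => (-1) ^ j * bin (2 * M) j * sin ((a - 2 * INR M + 2 * INR j) * t)) (2 * M).
Proof.
  induction M.
  - simpl. replace (a - 2 * 0 + 2 * 0) with a by ring. ring.
  - replace (2 * S M)%nat with (S (S (2 * M))) by lia.
    set (h := fun x => sin (x * t)).
    set (c := a - 2 * INR (S M)).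
    assert (Es : sum_f_R0 (fun j => (-1) ^ j * bin (S (S (2 * M))) j * sin ((c + 2 * INR j) * t)) (S (S (2 * M))) =
       sum_f_R0 (fun j => (-1) ^ j * bin (2 * M) j * ((fun x => h x - h (x + 2)) (c + 2 * INR j) - (fun x => h x - h (x + 2)) (c + 2 * INR j + 2))) (2 * M)).
    { transitivity (sum_f_R0 (fun j => (-1) ^ j * bin (S (2 * M)) j * (h (c + 2 * INR j) - h (c + 2 * INR j + 2))) (S (2 * M))).
      exact (bin_step h c (S (2 * M))).
      exact (bin_step (fun x => h x - h (x + 2)) c (2 * M)). }
    rewrite Es.
    transitivity ((-1) ^ S M * (/ 4) ^ S M * ((-4) * sin t ^ 2) * sum_f_R0 (fun j => (-1) ^ j * bin (2 * M) j * sin ((a - 2 * INR M + 2 * INR j) * t)) (2 * M)).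
    2:{ rewrite Rmult_assoc. f_equal. rewrite scal_sum. apply sum_eq. intros i _.
        unfold h, c. rewrite S_INR.
        pose proof (sin_second (a - 2 * INR M + 2 * INR i) t) as E.
        replace ((a - 2 * (INR M + 1) + 2 * INR i) * t) with ((a - 2 * INR M + 2 * INR i - 2) * t) by ring.
        replace ((a - 2 * (INR M + 1) + 2 * INR i + 2 + 2) * t) with ((a - 2 * INR M + 2 * INR i + 2) * t) by ring.
        replace ((a - 2 * (INR M + 1) + 2 * INR i + 2) * t) with ((a - 2 * INR M + 2 * INR i) * t) by ring.
        transitivity ((-1) ^ i * bin (2 * M) i * (sin ((a - 2 * INR M + 2 * INR i - 2) * t) - 2 * sin ((a - 2 * INR M + 2 * INR i) * t) + sin ((a - 2 * INR M + 2 * INR i + 2) * t))).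
        rewrite E. ring. ring. }
    replace (S (S (2 * M))) with (2 * M + 2)%nat by lia.
    rewrite pow_add, <- Rmult_assoc, IHM. simpl. field.
Qed.


Lemma der_plusR (f g : R -> R) x df dg : is_derive f x df -> is_derive g x dg ->
  is_derive (fun y => f y + g y) x (df + dg).
Proof. intros H1 H2. exact (@is_derive_plus R_AbsRing R_NormedModule f g x df dg H1 H2). Qed.
Lemma der_scalR (f : R -> R) x k df : is_derive f x df -> is_derive (fun y => k * f y) x (k * df).
Proof. intros H. exact (is_derive_scal f x k df H). Qed.
Lemma der_valR (f : R -> R) (x l l' : R) : l = l' -> is_derive f x l -> is_derive f x l'.
Proof. intros -> H; exact H. Qed.
Lemma der_compR (f g : R -> R) x df dg : is_derive f (g x) df -> is_derive g x dg ->
  is_derive (fun y => f (g y)) x (dg * df).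
Proof. intros H1 H2. exact (@is_derive_comp R_AbsRing R_NormedModule f g x df dg H1 H2). Qed.

Lemma der_sum (f : nat -> R -> R) (df : nat -> R) x K :
  (forall j, (j <= K)%nat -> is_derive (f j) x (df j)) ->
  is_derive (fun y => sum_f_R0 (fun j => f j y) K) x (sum_f_R0 df K).
Proof.
  induction K; intros H; simpl.
  - apply H; lia.
  - apply der_plusR. apply IHK; intros; apply H; lia. apply H; lia.
Qed.

Lemma der_acos x : -1 < x < 1 -> is_derive acos x (-1 / sqrt (1 - x²)).
Proof.
  intros H. apply is_derive_Reals. pose proof (derive_pt_acos x H) as E.
  revert E. unfold derive_pt. destruct (derivable_pt_acos x H) as [l Hl]. simpl. intros <-. exact Hl.
Qed.

Ltac nz := repeat match goal with |- _ * _ <> 0 => apply Rmult_integral_contrapositive_currified end; try lra.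

Definition P0 (n t : R) := cos (n * t).
Definition P1 (n t : R) := n * sin (n * t) / sin t.
Definition P2 (n t : R) := n * (cos t * sin (n * t) - n * cos (n * t) * sin t) / sin t ^ 3.
Definition P3 (n t : R) := n * ((1 - n ^ 2) * sin (n * t) * sin t ^ 2 + 3 * cos t * (cos t * sin (n * t) - n * cos (n * t) * sin t)) / sin t ^ 5.

Lemma chain (P dP : R -> R) Q x : -1 < x < 1 ->
  is_derive P (acos x) (dP (acos x)) ->
  dP (acos x) * (-1 / sin (acos x)) = Q ->
  is_derive (fun y => P (acos y)) x Q.
Proof.
  intros Hx H1 H2. apply (der_valR _ _ ((-1 / sqrt (1 - x²)) * dP (acos x))).
  rewrite <- H2, sin_acos by lra. ring.
  apply der_compR; auto. apply der_acos; auto.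
Qed.

Lemma sin_acos_pos x : -1 < x < 1 -> 0 < sin (acos x).
Proof. intros H. apply sin_gt_0; apply acos_bound_lt; auto. Qed.

Lemma dP0 n x : -1 < x < 1 -> is_derive (fun y => P0 n (acos y)) x (P1 n (acos x)).
Proof.
  intros Hx. assert (Hs := sin_acos_pos x Hx).
  apply (chain (P0 n) (fun t => - n * sin (n * t))).
  auto. unfold P0. auto_derive. auto. ring.
  unfold P1. field. lra.
Qed.

Lemma dP1 n x : -1 < x < 1 -> is_derive (fun y => P1 n (acos y)) x (P2 n (acos x)).
Proof.
  intros Hx. assert (Hs := sin_acos_pos x Hx).
  apply (chain (P1 n) (fun t => n * (n * cos (n * t) * sin t - sin (n * t) * cos t) / sin t ^ 2)).
  auto. unfold P1. auto_derive. lra. field. lra.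
  unfold P2. field. lra.
Qed.

Lemma dP2 n x : -1 < x < 1 -> is_derive (fun y => P2 n (acos y)) x (P3 n (acos x)).
Proof.
  intros Hx. assert (Hs := sin_acos_pos x Hx).
  apply (chain (P2 n) (fun t => n * ((n ^ 2 - 1) * sin t * sin (n * t) * sin t - 3 * cos t * (cos t * sin (n * t) - n * cos (n * t) * sin t)) / sin t ^ 4)).
  auto. unfold P2. auto_derive. nz. field. lra.
  unfold P3. field. lra.
Qed.

Lemma term_id p t : sin t <> 0 ->
  (p + 3) * ((p + 4) * (p + 5) * (sin ((p + 1) * t) / sin t)
     - (2 * p ^ 2 + 12 * p + 10) * (sin ((p + 3) * t) / sin t)
     + (p + 2) * (p + 1) * (sin ((p + 5) * t) / sin t)) = 4 * sin t ^ 4 * P3 (p + 3) t.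
Proof.
  intros Hs. unfold P3.
  replace ((p + 1) * t) with ((p + 3) * t - 2 * t) by ring.
  replace ((p + 5) * t) with ((p + 3) * t + 2 * t) by ring.
  rewrite sin_minus, sin_plus, sin_2a, cos_2a.
  set (S := sin ((p + 3) * t)). set (C := cos ((p + 3) * t)). set (n := p + 3).
  replace p with (n - 3) by (unfold n; ring).
  assert (Hcs : cos t * cos t + sin t * sin t - 1 = 0).
  { pose proof (sin2_cos2 t). unfold Rsqr in H. lra. }
  transitivity (n * ((n + 1) * (n + 2) * (S * (cos t * cos t - sin t * sin t) - C * (2 * sin t * cos t))
      - (2 * n ^ 2 - 8) * S + (n - 1) * (n - 2) * (S * (cos t * cos t - sin t * sin t) + C * (2 * sin t * cos t))) / sin t).
  { field. auto. }
  transitivity (n * (4 * (1 - n ^ 2) * S * sin t ^ 2 + 12 * cos t * (cos t * S - n * C * sin t)) / sin t).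
  2:{ field. auto. }
  f_equal. f_equal.
  transitivity (4 * (1 - n ^ 2) * S * sin t ^ 2 + 12 * cos t * (cos t * S - n * C * sin t)
     + S * (2 * n ^ 2 - 8) * (cos t * cos t + sin t * sin t - 1)).
  ring. rewrite Hcs. ring.
Qed.

Lemma RInt_sum (f : nat -> R -> R) a b K :
  (forall j, (j <= K)%nat -> ex_RInt (f j) a b) ->
  ex_RInt (fun s => sum_f_R0 (fun j => f j s) K) a b /\
  @eq R (RInt (fun s => sum_f_R0 (fun j => f j s) K) a b) (sum_f_R0 (fun j => RInt (f j) a b) K).
Proof.
  induction K; intros H; simpl.
  - split. apply H; lia. reflexivity.
  - destruct IHK as [E1 E2]. intros; apply H; lia.
    assert (E3 : ex_RInt (f (S K)) a b) by (apply H; lia).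
    split. apply (ex_plusR (fun s => sum_f_R0 (fun j => f j s) K) (f (S K))); auto.
    rewrite (RInt_plusR (fun s => sum_f_R0 (fun j => f j s) K) (f (S K))); auto.
    rewrite E2. reflexivity.
Qed.

Lemma PV_comb (c : nat -> R) (Nf : nat -> nat) K r : -1 < r < 1 ->
  filterlim (PVf (fun s => sum_f_R0 (fun j => c j * hN (Nf j) r s) K) r) (at_right 0)
    (locally (sum_f_R0 (fun j => c j * Lv r (Nf j)) K)).
Proof.
  intros Hr.
  apply (filterlim_ext_loc (fun eps => sum_f_R0 (fun j => c j * PVf (hN (Nf j) r) r eps) K)).
  { apply (filter_imp (fun eps => 0 < eps)).
    2:{ apply (filter_imp (fun e => 0 < e < 1)). intros; lra. apply ev_small; lra. }
    intros eps He. unfold PVf.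
    assert (C : forall j s, s <> r -> continuous (fun s => c j * hN (Nf j) r s) s).
    { intros j s Hs. apply cont_mult. apply cont_const. apply hN_cont; auto. }
    destruct (RInt_sum (fun j s => c j * hN (Nf j) r s) (-1) (r - eps) K) as [_ E1].
    { intros j _. apply ex_left; [lra | lra | apply C]. }
    destruct (RInt_sum (fun j s => c j * hN (Nf j) r s) (r + eps) 1 K) as [_ E2].
    { intros j _. apply ex_right; [lra | lra | apply C]. }
    rewrite E1, E2. rewrite <- plus_sum. apply sum_eq. intros j _.
    rewrite !RInt_scalR. ring.
    all: first [apply ex_right; [lra | lra | intros; apply hN_cont; auto] | apply ex_left; [lra | lra | intros; apply hN_cont; auto]]. }
  apply (lim_sum (at_right 0)). intros j _.
  apply (lim_scal (at_right 0)). apply PV_all. exact Hr.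
Qed.

Lemma FP_chain (D : R -> R) (G0 G1 G2 : R -> R) r l :
  (forall x, -1 < x < 1 -> is_PV D x (G0 x)) ->
  (forall x, -1 < x < 1 -> is_derive G0 x (G1 x)) ->
  (forall x, -1 < x < 1 -> is_derive G1 x (2 * G2 x)) ->
  is_derive G2 r (3 * l) -> is_FP D 3 r l.
Proof.
  intros H0 H1 H2 H3. simpl is_FP.
  exists G2. split.
  - intros r' Hr'. exists G1. split.
    + intros r'' Hr''. exists G0. split.
      * intros r3 Hr3. apply H0. exact Hr3.
      * apply (der_valR _ _ (G1 r'')). simpl. ring. apply H1. exact Hr''.
    + apply (der_valR _ _ (2 * G2 r')). simpl. ring. apply H2. exact Hr'.
  - apply (der_valR _ _ (3 * l)). simpl. ring. exact H3.
Qed.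

Lemma half_pow M : (1 / 2) ^ (2 * S M + 1) = (/ 4) ^ M * / 8.
Proof.
  replace (2 * S M + 1)%nat with (2 * M + 3)%nat by lia.
  rewrite pow_add, pow_mult. replace ((1/2)^2) with (/4) by field. simpl. field.
Qed.

Lemma sum_div (f : nat -> R) K d : sum_f_R0 f K / d = sum_f_R0 (fun j => f j / d) K.
Proof. unfold Rdiv. rewrite Rmult_comm, scal_sum. apply sum_eq. intros; ring. Qed.

Lemma sum_scal_l (f : nat -> R) K c : sum_f_R0 (fun j => c * f j) K = c * sum_f_R0 f K.
Proof. rewrite scal_sum. apply sum_eq. intros; ring. Qed.

Theorem mainTheorem8 (m n : nat) (r : R) :
  (2 <= m)%nat -> (2 * m + 1 <= n)%nat -> Rabs r < 1 ->
  let p := fun j : nat => (n - 2 * m + 2 * j)%nat in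
  is_FP (fun s => U n s * ((1 - s ^ 2) ^ (m - 1) * sqrt (1 - s ^ 2))) 3 r
    ((-1) ^ m * (1 / 2) ^ (2 * m + 1) * (1 / 3) * (PI / (1 - r ^ 2) ^ 2) *
     sum_f_R0 (fun j =>
        (-1) ^ j * Binomial.C (2 * m - 2) j * (INR (p j) + 3) *
        ((INR (p j) + 4) * (INR (p j) + 5) * U (p j) r
         - (2 * INR (p j) ^ 2 + 12 * INR (p j) + 10) * U (p j + 2)%nat r
         + (INR (p j) + 2) * (INR (p j) + 1) * U (p j + 4)%nat r))
      (2 * m - 2)).
Proof.
  intros Hm Hn Hr p.
  assert (Hr1 : -1 < r < 1) by (apply Rabs_def2 in Hr; lra).
  set (M := (m - 1)%nat). assert (HM : m = S M) by (unfold M; lia).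
  set (K := (2 * M)%nat). assert (HK : (2 * m - 2)%nat = K) by (unfold K, M; lia).
  set (Nj := fun j => S (S (S (p j)))).
  set (cst := (-1) ^ M * (/ 4) ^ M).
  set (bj := fun j => cst * ((-1) ^ j * bin K j)).
  set (D := fun s => U n s * ((1 - s ^ 2) ^ (m - 1) * sqrt (1 - s ^ 2))).
  assert (HINR : forall j, INR (Nj j) = INR (S n) - 2 * INR M + 2 * INR j).
  { intros j. unfold Nj, p. rewrite !S_INR, plus_INR, minus_INR by lia. rewrite !mult_INR.
    rewrite HM. rewrite ?S_INR. simpl INR. ring. }
  assert (HD : forall s, -1 < s < 1 -> D s = sum_f_R0 (fun j => bj j * sin (INR (Nj j) * acos s)) K).
  { intros s Hs. unfold D, U.
    set (t := acos s).
    assert (Hst : 0 < sin t) by (apply sin_acos_pos; auto).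
    assert (Hc : cos t = s) by (apply cos_acos; lra).
    assert (H1 : 1 - s ^ 2 = sin t ^ 2).
    { rewrite <- Hc. pose proof (sin2_cos2 t). unfold Rsqr in H. simpl. lra. }
    rewrite H1, sqrt_pow2 by lra. rewrite <- pow_mult.
    replace (2 * (m - 1))%nat with K by (unfold K, M; lia).
    transitivity (sin (INR (S n) * t) * sin t ^ K).
    { field. lra. }
    unfold K. rewrite expand. fold K. fold cst.
    rewrite <- sum_scal_l. apply sum_eq. intros j _. unfold bj. rewrite HINR. ring. }
  set (G0 := fun x => sum_f_R0 (fun j => bj j * (- PI * P0 (INR (Nj j)) (acos x))) K).
  set (G1 := fun x => sum_f_R0 (fun j => bj j * (- PI * P1 (INR (Nj j)) (acos x))) K).
  set (G2 := fun x => / 2 * sum_f_R0 (fun j => bj j * (- PI * P2 (INR (Nj j)) (acos x))) K).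
  apply (FP_chain D G0 G1 G2).
  -
    intros x Hx. unfold is_PV.
    apply (filterlim_ext_loc (PVf (fun s => sum_f_R0 (fun j => bj j * hN (Nj j) x s) K) x)).
    { apply (filter_imp (fun eps => 0 < eps /\ -1 < x - eps /\ x + eps < 1)).
      2: apply ev_range; exact Hx.
      intros eps [E1 [E2 E3]]. unfold PVf.
      assert (Pt : forall s, -1 < s < 1 -> s <> x ->
                sum_f_R0 (fun j => bj j * hN (Nj j) x s) K = D s / (s - x)).
      { intros s Hs Hsx. rewrite HD by exact Hs. rewrite sum_div. apply sum_eq. intros j _.
        unfold hN, sN. rewrite ac_acos by lra. field. lra. }
      f_equal.
      - apply RInt_ext. intros y Hy. rewrite Rmin_left, Rmax_right in Hy by lra. apply Pt; lra.
      - apply RInt_ext. intros y Hy. rewrite Rmin_left, Rmax_right in Hy by lra. apply Pt; lra. }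
    replace (G0 x) with (sum_f_R0 (fun j => bj j * Lv x (Nj j)) K).
    apply PV_comb. exact Hx.
    unfold G0. apply sum_eq. intros j _. reflexivity.
  - intros x Hx. unfold G0, G1.
    apply (der_sum (fun j y => bj j * (- PI * P0 (INR (Nj j)) (acos y)))).
    intros j _. apply der_scalR. apply der_scalR. apply dP0. exact Hx.
  - intros x Hx. unfold G1, G2.
    apply (der_valR _ _ (sum_f_R0 (fun j => bj j * (- PI * P2 (INR (Nj j)) (acos x))) K)).
    field.
    apply (der_sum (fun j y => bj j * (- PI * P1 (INR (Nj j)) (acos y)))).
    intros j _. apply der_scalR. apply der_scalR. apply dP1. exact Hx.
  - unfold G2.
    apply (der_valR _ _ (/ 2 * sum_f_R0 (fun j => bj j * (- PI * P3 (INR (Nj j)) (acos r))) K)).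
    2:{ apply der_scalR. apply (der_sum (fun j y => bj j * (- PI * P2 (INR (Nj j)) (acos y)))).
        intros j _. apply der_scalR. apply der_scalR. apply dP2. exact Hr1. }
    set (th := acos r).
    assert (Hs : 0 < sin th) by (apply sin_acos_pos; auto).
    assert (Hc : cos th = r) by (apply cos_acos; lra).
    assert (H1 : 1 - r ^ 2 = sin th ^ 2).
    { rewrite <- Hc. pose proof (sin2_cos2 th). unfold Rsqr in H. simpl. lra. }
    set (Sg := sum_f_R0 (fun j => (-1) ^ j * bin K j * P3 (INR (Nj j)) th) K).
    assert (L : sum_f_R0 (fun j => bj j * (- PI * P3 (INR (Nj j)) th)) K = cst * (- PI) * Sg).
    { unfold Sg. rewrite <- sum_scal_l. apply sum_eq. intros j _. unfold bj. ring. }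
    rewrite L. rewrite HK.
    assert (R : sum_f_R0 (fun j =>
        (-1) ^ j * Binomial.C K j * (INR (p j) + 3) *
        ((INR (p j) + 4) * (INR (p j) + 5) * U (p j) r
         - (2 * INR (p j) ^ 2 + 12 * INR (p j) + 10) * U (p j + 2)%nat r
         + (INR (p j) + 2) * (INR (p j) + 1) * U (p j + 4)%nat r)) K = 4 * sin th ^ 4 * Sg).
    { unfold Sg. rewrite <- sum_scal_l. apply sum_eq. intros j Hj.
      rewrite <- bin_C by exact Hj.
      assert (HN : INR (Nj j) = INR (p j) + 3) by (unfold Nj; rewrite !S_INR; ring).
      rewrite HN.
      transitivity ((-1) ^ j * bin K j * (4 * sin th ^ 4 * P3 (INR (p j) + 3) th)). 2: ring.
      rewrite <- term_id by lra.
      unfold U. fold th.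
      replace (INR (S (p j))) with (INR (p j) + 1) by (rewrite S_INR; ring).
      replace (INR (S (p j + 2))) with (INR (p j) + 3) by (rewrite S_INR, plus_INR; simpl; ring).
      replace (INR (S (p j + 4))) with (INR (p j) + 5) by (rewrite S_INR, plus_INR; simpl; ring).
      ring. }
    rewrite R, H1. unfold cst. rewrite HM, half_pow. simpl pow. field. lra.
Qed.
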